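(* Let $\mathcal M=(M,<,+,0,\ldots)$ be a definably complete locally o-minimal expansion of an ordered group. Let $(G,\tau)$ be a definable topological group having the definable curve selection property, $U$ a definable neighborhood of the identity $e$ in $G$, and $C$ a definably compact definable subset of $G$. Then $\bigcap_{h\in C}hUh^{-1}$ is a neighborhood of $e$.
   Context: ''Definable'' means definable in $\mathcal M$ with parameters. $\mathcal M$ is an expansion of an ordered group with dense order without endpoints; locally o-minimal: for every definable $Y\subseteq M$ and $a\in M$ there is an open interval $I\ni a$ with $Y\cap I$ a finite union of points and open intervals; definably complete: every definable subset of $M$ has sup and inf in $M\cup\{\pm\infty\}$. A definable topological group is a definable group with a topology having a definable open base in which multiplication and inversion are continuous. A definable subset is definably compact if, with the relative topology, every definable filtered family (any two members contain a common member) of nonempty closed subsets has nonempty intersection. A definable curve is a definable, not necessarily continuous, map from an open interval; for $\gamma:(a,b)\to X$, $\operatorname{Conv}_{\mathrm{left}}(\gamma)$ is the set of $x$ such that for every $t\in(a,b)$ and every definable neighborhood $A$ of $x$, $\gamma((a,t))\cap A\ne\emptyset$. A definable topological space $(X,\tau)$ has the definable curve selection property if for every definable $D\subseteq X$ and every $x$ in the frontier $\partial_\tau D$ there is a definable curve $\gamma:(a,b)\to D$ with $a\in M$ and $x\in\operatorname{Conv}_{\mathrm{left}}(\gamma)$. *)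

(* Defs.v *)
(* A first-order expansion of an ordered group is
   represented, as in van den Dries' "Tame topology and o-minimal structures",
   by the collection of all its (parameter-)definable sets. *)
From Stdlib Require List.
From mathcomp Require Import all_boot.

Set Implicit Arguments.
Unset Strict Implicit.
Unset Printing Implicit Defensive.

Record ordered_group := OrderedGroup {
  og_car :> Type;
  og_lt : og_car -> og_car -> Prop;
  og_add : og_car -> og_car -> og_car;
  og_zero : og_car;
  og_opp : og_car -> og_car;
  og_ltirr : forall x, ~ og_lt x x;
  og_lttrans : forall x y z, og_lt x y -> og_lt y z -> og_lt x z;
  og_lttotal : forall x y, og_lt x y \/ x = y \/ og_lt y x;
  og_addA : forall x y z, og_add x (og_add y z) = og_add (og_add x y) z;
  og_add0x : forall x, og_add og_zero x = x;
  og_addx0 : forall x, og_add x og_zero = x;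
  og_addNx : forall x, og_add (og_opp x) x = og_zero;
  og_addxN : forall x, og_add x (og_opp x) = og_zero;
  og_ltaddl : forall x y z, og_lt x y -> og_lt (og_add z x) (og_add z y);
  og_ltaddr : forall x y z, og_lt x y -> og_lt (og_add x z) (og_add y z);
  og_dense : forall x y, og_lt x y -> exists z, og_lt x z /\ og_lt z y;
  og_noleft : forall x, exists y, og_lt y x;
  og_noright : forall x, exists y, og_lt x y
}.

Section Defs.
Variable M : ordered_group.

Definition lt := @og_lt M.
Definition le (x y : M) := lt x y \/ x = y.

Definition pt (n : nat) := 'I_n -> M.
Definition rset (n : nat) := pt n -> Prop.

Definition pcat (n m : nat) (x : pt n) (y : pt m) : pt (n + m) :=
  fun i => match split i with inl j => x j | inr j => y j end.

Definition pt1 (t : M) : pt 1 := fun _ => t.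

Definition i2_0 : 'I_2 := @Ordinal 2 0 isT.
Definition i2_1 : 'I_2 := @Ordinal 2 1 isT.
Definition i3_0 : 'I_3 := @Ordinal 3 0 isT.
Definition i3_1 : 'I_3 := @Ordinal 3 1 isT.
Definition i3_2 : 'I_3 := @Ordinal 3 2 isT.

Record expansion := Expansion {
  def : forall n, rset n -> Prop;
  def_T : forall n, def (fun _ : pt n => True);
  def_compl : forall n (A : rset n), def A -> def (fun x => ~ A x);
  def_inter : forall n (A B : rset n), def A -> def B -> def (fun x => A x /\ B x);
  (* preimages under coordinate maps x |-> x o f (products with M,
     permutations and identifications of coordinates) *)
  def_preim : forall m n (f : 'I_m -> 'I_n) (A : rset m),
      def A -> def (fun x : pt n => A (fun i => x (f i)));
  def_image : forall m n (f : 'I_m -> 'I_n) (A : rset n),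
      def A -> def (fun y : pt m => exists x, A x /\ forall i, y i = x (f i));
  def_diag : def (fun x : pt 2 => x i2_0 = x i2_1);
  def_point : forall c : M, def (fun x : pt 1 => x ord0 = c);
  def_lt : def (fun x : pt 2 => lt (x i2_0) (x i2_1));
  def_add : def (fun x : pt 3 => x i3_2 = og_add (x i3_0) (x i3_1))
}.

Variable D : expansion.
Definition definable n (A : rset n) := def D A.

Definition locally_o_minimal : Prop :=
  forall (Y : rset 1), definable Y -> forall a : M,
    exists c d : M, lt c a /\ lt a d /\
      exists (ps : list M) (ivs : list (M * M)),
        forall y : M, (Y (pt1 y) /\ lt c y /\ lt y d) <->
          (List.In y ps \/ exists p, List.In p ivs /\ lt p.1 y /\ lt y p.2).

Inductive ext := minf | fin of M | pinf.
Definition ext_le (x y : ext) : Prop :=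
  match x, y with
  | minf, _ => True
  | _, pinf => True
  | fin a, fin b => le a b
  | _, _ => False
  end.

Definition has_sup (Y : M -> Prop) : Prop :=
  exists s : ext, (forall y, Y y -> ext_le (fin y) s) /\
    (forall u : ext, (forall y, Y y -> ext_le (fin y) u) -> ext_le s u).
Definition has_inf (Y : M -> Prop) : Prop :=
  exists s : ext, (forall y, Y y -> ext_le s (fin y)) /\
    (forall u : ext, (forall y, Y y -> ext_le u (fin y)) -> ext_le u s).

Definition definably_complete : Prop :=
  forall (Y : rset 1), definable Y ->
    has_sup (fun y => Y (pt1 y)) /\ has_inf (fun y => Y (pt1 y)).

Section TopGroup.
Variables (n : nat) (G : rset n).
Variables (mul : pt n -> pt n -> pt n) (inv : pt n -> pt n) (e : pt n).
(* the open base {B t | T t}, indexed by a rsubset T of M^k *)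
Variables (k : nat) (T : rset k) (B : pt k -> rset n).

Definition rsubset m (A A' : rset m) := forall x, A x -> A' x.

Definition is_group : Prop :=
  G e /\
  (forall x y, G x -> G y -> G (mul x y)) /\
  (forall x, G x -> G (inv x)) /\
  (forall x y z, G x -> G y -> G z -> mul x (mul y z) = mul (mul x y) z) /\
  (forall x, G x -> mul e x = x /\ mul x e = x) /\
  (forall x, G x -> mul (inv x) x = e /\ mul x (inv x) = e).

Definition definable_group : Prop :=
  is_group /\ definable G /\
  definable (fun z : pt ((n + n) + n) =>
     exists x y, G x /\ G y /\ z = pcat (pcat x y) (mul x y)) /\
  definable (fun z : pt (n + n) => exists x, G x /\ z = pcat x (inv x)).

Definition definable_base : Prop :=
  definable T /\
  definable (fun z : pt (n + k) => exists x t, T t /\ B t x /\ z = pcat x t) /\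
  (forall t, T t -> rsubset (B t) G) /\
  (forall x, G x -> exists t, T t /\ B t x) /\
  (forall t1 t2 x, T t1 -> T t2 -> B t1 x -> B t2 x ->
     exists t3, T t3 /\ B t3 x /\ rsubset (B t3) (fun y => B t1 y /\ B t2 y)).

Definition is_open (V : rset n) : Prop :=
  rsubset V G /\ forall x, V x -> exists t, T t /\ B t x /\ rsubset (B t) V.

Definition is_nbhd (x : pt n) (A : rset n) : Prop :=
  rsubset A G /\ exists V, is_open V /\ V x /\ rsubset V A.

Definition definable_topological_group : Prop :=
  definable_group /\ definable_base /\
  (forall x y, G x -> G y -> forall W, is_open W -> W (mul x y) ->
     exists V1 V2, is_open V1 /\ is_open V2 /\ V1 x /\ V2 y /\
       forall a b, V1 a -> V2 b -> W (mul a b)) /\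
  (forall x, G x -> forall W, is_open W -> W (inv x) ->
     exists V, is_open V /\ V x /\ forall a, V a -> W (inv a)).

Definition closure (A : rset n) : rset n :=
  fun x => G x /\ forall V, is_open V -> V x -> exists y, V y /\ A y.
Definition frontier (A : rset n) : rset n :=
  fun x => closure A x /\ ~ A x.

Definition rel_closed (C F : rset n) : Prop :=
  rsubset F C /\
  forall x, C x -> ~ F x -> exists V, is_open V /\ V x /\
     forall y, V y -> C y -> ~ F y.

Definition definably_compact (C : rset n) : Prop :=
  forall (j : nat) (S : rset j) (F : pt j -> rset n),
    definable S ->
    definable (fun z : pt (n + j) => exists x s, S s /\ F s x /\ z = pcat x s) ->
    (exists s, S s) ->
    (forall s, S s -> rel_closed C (F s) /\ exists x, F s x) ->
    (forall s1 s2, S s1 -> S s2 -> exists s3, S s3 /\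
        rsubset (F s3) (fun x => F s1 x /\ F s2 x)) ->
    exists x, C x /\ forall s, S s -> F s x.

(* open intervals (a, b) with a in M and b in M u {+oo} *)
Definition in_interval (a : M) (b : option M) (t : M) : Prop :=
  lt a t /\ match b with Some b' => lt t b' | None => True end.

Definition conv_left (a : M) (b : option M) (gamma : M -> pt n) : rset n :=
  fun x => G x /\ forall t, in_interval a b t ->
    forall A, definable A -> is_nbhd x A ->
      exists s, lt a s /\ lt s t /\ A (gamma s).

Definition curve_selection : Prop :=
  forall (Dset : rset n), definable Dset -> rsubset Dset G ->
  forall x, frontier Dset x ->
    exists (a : M) (b : option M) (gamma : M -> pt n),
      (match b with Some b' => lt a b' | None => True end) /\
      definable (fun z : pt (1 + n) =>
          exists t, in_interval a b t /\ z = pcat (pt1 t) (gamma t)) /\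
      (forall t, in_interval a b t -> Dset (gamma t)) /\
      conv_left a b gamma x.

End TopGroup.
End Defs.

(* Main.v *)
Require Import Defs.
From mathcomp Require Import all_boot.
From Stdlib Require Import Classical FunctionalExtensionality PropExtensionality.

Set Implicit Arguments.
Unset Strict Implicit.
Unset Printing Implicit Defensive.

Lemma def_ext (M : ordered_group) (D : expansion M) n (A A' : rset M n) :
  definable D A -> (forall x, A x <-> A' x) -> definable D A'.
Proof.
move=> h E; have -> : A' = A; last exact h.
apply: functional_extensionality => x; apply: propositional_extensionality.
by split; apply E.
Qed.

Lemma pcatL (M : ordered_group) a b (x : pt M a) (y : pt M b) :
  pcat x y \o lshift b = x.
Proof.
apply: functional_extensionality => i; rewrite /comp /pcat.
by have /= -> := @unsplitK a b (inl i).
Qed.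

Lemma pcatR (M : ordered_group) a b (x : pt M a) (y : pt M b) :
  pcat x y \o @rshift a b = y.
Proof.
apply: functional_extensionality => i; rewrite /comp /pcat.
by have /= -> := @unsplitK a b (inr i).
Qed.

Lemma pcatE (M : ordered_group) a b (w : pt M (a + b)) :
  pcat (w \o lshift b) (w \o @rshift a b) = w.
Proof.
apply: functional_extensionality => i; rewrite /comp /pcat.
by case: split_ordP => j ->.
Qed.

Lemma pcat_inj (M : ordered_group) a b (x x' : pt M a) (y y' : pt M b) :
  pcat x y = pcat x' y' -> x = x' /\ y = y'.
Proof.
move=> E; split.
  by rewrite -(pcatL x y) -(pcatL x' y') E.
by rewrite -(pcatR x y) -(pcatR x' y') E.
Qed.

Lemma def_and (M : ordered_group) (D : expansion M) n (A B : rset M n) :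
  definable D A -> definable D B -> definable D (fun x => A x /\ B x).
Proof. exact: def_inter. Qed.

Lemma def_not (M : ordered_group) (D : expansion M) n (A : rset M n) :
  definable D A -> definable D (fun x => ~ A x).
Proof. exact: def_compl. Qed.

Lemma def_imp (M : ordered_group) (D : expansion M) n (A B : rset M n) :
  definable D A -> definable D B -> definable D (fun x => A x -> B x).
Proof.
move=> hA hB; apply: def_ext (def_not (def_and hA (def_not hB))) _ => x.
split; first by move=> h H; apply: NNPP => nb; apply: h.
by move=> h [] /h.
Qed.

Lemma def_c1 (M : ordered_group) (D : expansion M) a N (A : rset M a)
  (f : 'I_a -> 'I_N) :
  definable D A -> definable D (fun w : pt M N => A (w \o f)).
Proof. exact: def_preim. Qed.

Definition sp a b N (f1 : 'I_a -> 'I_N) (f2 : 'I_b -> 'I_N) : 'I_(a + b) -> 'I_N :=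
  fun i => match split i with inl j => f1 j | inr j => f2 j end.

Lemma def_c2 (M : ordered_group) (D : expansion M) a b N (A : rset M (a + b))
  (f1 : 'I_a -> 'I_N) (f2 : 'I_b -> 'I_N) :
  definable D A -> definable D (fun w : pt M N => A (pcat (w \o f1) (w \o f2))).
Proof.
move=> h; apply: def_ext (def_c1 (sp f1 f2) h) _ => w.
suff -> : w \o sp f1 f2 = pcat (w \o f1) (w \o f2) by [].
apply: functional_extensionality => i; rewrite /comp /pcat /sp.
by case: split.
Qed.

Lemma def_c3 (M : ordered_group) (D : expansion M) a b c N (A : rset M ((a + b) + c))
  (f1 : 'I_a -> 'I_N) (f2 : 'I_b -> 'I_N) (f3 : 'I_c -> 'I_N) :
  definable D A ->
  definable D (fun w : pt M N => A (pcat (pcat (w \o f1) (w \o f2)) (w \o f3))).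
Proof.
move=> h; apply: def_ext (def_c1 (sp (sp f1 f2) f3) h) _ => w.
suff -> : w \o sp (sp f1 f2) f3 = pcat (pcat (w \o f1) (w \o f2)) (w \o f3) by [].
apply: functional_extensionality => i; rewrite /comp /pcat /sp.
by case: split => // j; case: split.
Qed.

Lemma def_ex (M : ordered_group) (D : expansion M) m p (A : rset M (m + p)) :
  definable D A -> definable D (fun y : pt M m => exists x : pt M p, A (pcat y x)).
Proof.
move=> h; apply: def_ext (def_image (lshift p) h) _ => y; split.
  move=> [z [Az E]]; exists (z \o @rshift m p).
  suff -> : y = z \o lshift p by rewrite pcatE.
  by apply: functional_extensionality => i; rewrite E.
move=> [x Ax]; exists (pcat y x); split => // i.
by rewrite -[in LHS](pcatL y x).
Qed.

Lemma def_all_fin (M : ordered_group) (D : expansion M) N m (P : 'I_m -> rset M N) :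
  (forall i, definable D (P i)) -> definable D (fun x => forall i, P i x).
Proof.
move=> h.
have H : forall l : seq 'I_m, definable D (fun x => forall i, i \in l -> P i x).
  elim=> [|a l IH].
    by apply: def_ext (def_T D N) _ => x; split => // _ i.
  apply: def_ext (def_and (h a) IH) _ => x; split.
    by move=> [ha hl] i; rewrite in_cons => /orP [/eqP -> //| /hl].
  move=> H; split; first by apply: H; rewrite mem_head.
  by move=> i il; apply: H; rewrite in_cons il orbT.
apply: def_ext (H (enum 'I_m)) _ => x; split.
  by move=> H' i; apply: H'; rewrite mem_enum.
by move=> H' i _.
Qed.

Lemma def_pt (M : ordered_group) (D : expansion M) N (c : pt M N) :
  definable D (fun x : pt M N => x = c).
Proof.
have h : forall i : 'I_N, definable D (fun x : pt M N => x i = c i).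
  move=> i; apply: def_ext (def_c1 (fun _ : 'I_1 => i) (def_point D (c i))) _ => x.
  by [].
apply: def_ext (def_all_fin h) _ => x; split.
  by move=> H; apply: functional_extensionality.
by move=> ->.
Qed.

Local Notation L := (lshift _).
Local Notation R := (@rshift _ _).
Theorem lemma5p3 (M : ordered_group) (D : expansion M)
  (hloc : locally_o_minimal D) (hdc : definably_complete D)
  (n : nat) (G : rset M n) (mul : pt M n -> pt M n -> pt M n)
  (inv : pt M n -> pt M n) (e : pt M n)
  (k : nat) (T : rset M k) (B : pt M k -> rset M n)
  (hGtop : definable_topological_group D G mul inv e T B)
  (hcs : curve_selection D G T B)
  (U : rset M n) (hUdef : definable D U) (hU : is_nbhd G T B e U)
  (C : rset M n) (hCdef : definable D C) (hCG : rsubset C G)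
  (hCc : definably_compact D G T B C) :
  is_nbhd G T B e
    (fun x => G x /\ forall h, C h -> exists u, U u /\ x = mul (mul h u) (inv h)).
Proof.
case: hGtop => [[hgrp [hGdef [hMdef hIdef]]] [[hTdef [hBdef [hBG [hcov hint]]]] [hcm hci]]].
case: hgrp => [he [hmulG [hinvG [hassoc [hid hinv]]]]].
have Inv_eq : forall x y : pt M n,
  (exists x', G x' /\ pcat x y = pcat x' (inv x')) = (G x /\ y = inv x).
  move=> x y; apply: propositional_extensionality; split.
    by move=> [x' [Gx' /pcat_inj [-> ->]]].
  by move=> [Gx ->]; exists x.
have Mul_eq : forall x y z : pt M n,
  (exists x' y', G x' /\ G y' /\ pcat (pcat x y) z = pcat (pcat x' y') (mul x' y'))
  = (G x /\ G y /\ z = mul x y).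
  move=> x y z; apply: propositional_extensionality; split.
    by move=> [x' [y' [Gx [Gy /pcat_inj [/pcat_inj [-> ->] ->]]]]].
  by move=> [Gx [Gy ->]]; exists x, y.
have Bs_eq : forall (x : pt M n) (t : pt M k),
  (exists x' t', T t' /\ B t' x' /\ pcat x t = pcat x' t') = (T t /\ B t x).
  move=> x t; apply: propositional_extensionality; split.
    by move=> [x' [t' [Tt [Bt /pcat_inj [-> ->]]]]].
  by move=> [Tt Bt]; exists x, t.
have E1def : definable D (fun u : pt M ((n + n) + n) => exists a : pt M n,
   (G (u \o L \o L) /\ a = inv (u \o L \o L)) /\
   (G a /\ G (u \o L \o R) /\ u \o R = mul a (u \o L \o R))).
  apply: def_ext (def_ex (m := (n + n) + n) (p := n)
     (def_and (def_c2 (L \o (L \o L)) R hIdef)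
              (def_c3 R (L \o (L \o R)) (L \o R) hMdef))) _ => u.
  split; move=> [a H]; exists a; move: H;
    by rewrite !compA !pcatL !pcatR Inv_eq Mul_eq.
have Qdef : definable D (fun y : pt M ((n + n) + n) => exists b : pt M n,
   (exists a : pt M n, (G (y \o L \o L) /\ a = inv (y \o L \o L)) /\
      (G a /\ G (y \o L \o R) /\ b = mul a (y \o L \o R))) /\
   (G b /\ G (y \o L \o L) /\ y \o R = mul b (y \o L \o L))).
  apply: def_ext (def_ex (m := (n + n) + n) (p := n)
     (def_and (def_c2 (L \o L) R E1def)
              (def_c3 R (L \o (L \o L)) (L \o R) hMdef))) _ => y.
  split; move=> [b H]; exists b; move: H;
    by rewrite /= ?compA ?pcatL ?pcatR Mul_eq.
have Kdef : definable D (fun w : pt M (n + n) => G (w \o L) /\ G (w \o R) /\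
    ~ U (mul (mul (inv (w \o L)) (w \o R)) (w \o L))).
  apply: def_ext (def_and (def_c1 L hGdef) (def_and (def_c1 R hGdef)
     (def_ex (m := n + n) (p := n) (def_and Qdef (def_not (def_c1 R hUdef)))))) _ => w.
  split.
    move=> [Gg [Gx [c H]]]; move: H; rewrite /= ?compA ?pcatL ?pcatR.
    move=> [[b [[a [[_ ->] [_ [_ ->]]]] [_ [_ ->]]]] nU]; by split => //; split.
  move=> [Gg [Gx nU]]; split => //; split => //.
  exists (mul (mul (inv (w \o L)) (w \o R)) (w \o L)).
  rewrite /= ?compA ?pcatL ?pcatR; split => //.
  exists (mul (inv (w \o L)) (w \o R)); split.
    exists (inv (w \o L)); split => //; split; first by apply: hinvG.
    by split.
  split; first by apply: hmulG => //; apply: hinvG.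
  by split.
have Baddef : definable D (fun v : pt M (k + n) => T (v \o L) /\ C (v \o R) /\
    exists x, B (v \o L) x /\ ~ U (mul (mul (inv (v \o R)) x) (v \o R))).
  apply: def_ext (def_and (def_c1 L hTdef) (def_and (def_c1 R hCdef)
     (def_ex (m := k + n) (p := n)
        (def_and (def_c2 R (L \o L) hBdef) (def_c2 (L \o R) R Kdef))))) _ => v.
  split.
    move=> [Ts [Cg [x H]]]; move: H; rewrite /= ?compA ?pcatL ?pcatR Bs_eq.
    move=> [[_ Bx] [_ [_ nU]]]; split => //; split => //; by exists x.
  move=> [Ts [Cg [x [Bx nU]]]]; split => //; split => //; exists x.
  rewrite /= ?compA ?pcatL ?pcatR Bs_eq; split => //; split; first exact: hCG.
  split => //; exact: (hBG _ Ts).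
have Indef : definable D (fun y : pt M ((n + k) + k) => exists g,
    (T (y \o R) /\ B (y \o R) g) /\
    (T (y \o L \o R) /\ C g /\ exists x, B (y \o L \o R) x /\ ~ U (mul (mul (inv g) x) g))).
  apply: def_ext (def_ex (m := (n + k) + k) (p := n)
     (def_and (def_c2 R (L \o R) hBdef) (def_c2 (L \o (L \o R)) R Baddef))) _ => y.
  split; move=> [g H]; exists g; move: H;
    by rewrite /= ?compA ?pcatL ?pcatR Bs_eq.
have S0def : definable D (fun s : pt M k => T s /\ B s e).
  apply: def_ext (def_ex (m := k) (p := n)
     (def_and (def_c1 R (def_pt D e)) (def_c2 R L hBdef))) _ => s.
  split.
    move=> [x]; rewrite /= ?compA ?pcatL ?pcatR Bs_eq.
    by move=> [-> H].
  by move=> H; exists e; rewrite /= ?compA ?pcatL ?pcatR Bs_eq.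
have Alldef : definable D (fun z : pt M (n + k) => forall t', T t' -> B t' (z \o L) ->
    exists g, (T t' /\ B t' g) /\
    (T (z \o R) /\ C g /\ exists x, B (z \o R) x /\ ~ U (mul (mul (inv g) x) g))).
  apply: def_ext (def_not (def_ex (m := n + k) (p := k)
     (def_not (def_imp (def_c2 (L \o L) R hBdef) Indef)))) _ => z.
  split.
    move=> H t' Tt Bt; apply: NNPP => nE; apply: H; exists t'.
    rewrite /= ?compA ?pcatL ?pcatR Bs_eq => H; apply: nE.
    by have := H (conj Tt Bt); rewrite ?compA ?pcatL ?pcatR.
  move=> H [t']; rewrite /= ?compA ?pcatL ?pcatR Bs_eq; apply.
  by move=> [Tt Bt]; rewrite ?compA ?pcatL ?pcatR; apply: H.
pose S := fun s : pt M k => T s /\ B s e.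
pose F := fun (s : pt M k) (h : pt M n) => C h /\ forall t', T t' -> B t' h ->
   exists g, B t' g /\ (C g /\ exists x, B s x /\ ~ U (mul (mul (inv g) x) g)).
have Famdef : definable D (fun z : pt M (n + k) =>
    exists x s, S s /\ F s x /\ z = pcat x s).
  apply: def_ext (def_and (def_c1 R S0def) (def_and (def_c1 L hCdef) Alldef)) _ => z.
  split.
    move=> [[Ts Bse] [Cx H]]; exists (z \o L), (z \o R); split => //; split; last by rewrite pcatE.
    split => // t' Tt Bt; have [g [[_ Bg] [_ [Cg Hx]]]] := H t' Tt Bt.
    by exists g.
  move=> [x [s [[Ts Bse] [[Cx H] ->]]]]; rewrite /= ?pcatL ?pcatR.
  split => //; split => // t' Tt Bt; have [g [Bg Hg]] := H t' Tt Bt.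
  by exists g.
have Bopen : forall t, T t -> is_open G T B (B t).
  move=> t Tt; split; first exact: hBG.
  move=> x Bx; have [t3 [T3 [B3 sub]]] := hint t t x Tt Tt Bx Bx.
  by exists t3; split => //; split => // y /sub [].
have Iopen : forall V1 V2, is_open G T B V1 -> is_open G T B V2 ->
    is_open G T B (fun x => V1 x /\ V2 x).
  move=> V1 V2 [s1 o1] [s2 o2]; split; first by move=> x [/s1].
  move=> x [v1 v2]; have [t1 [T1 [B1 sub1]]] := o1 x v1.
  have [t2 [T2 [B2 sub2]]] := o2 x v2.
  have [t3 [T3 [B3 sub]]] := hint t1 t2 x T1 T2 B1 B2.
  exists t3; split => //; split => // y /sub [/sub1 ? /sub2 ?]; by split.
split; first by move=> x [].
have [[t [Tt [Bt sub]]] | NV] :=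
  classic (exists t, T t /\ B t e /\ rsubset (B t)
    (fun x => G x /\ forall h, C h -> exists u, U u /\ x = mul (mul h u) (inv h))).
  by exists (B t); split; [exact: Bopen | split].
exfalso.
have Sne : exists s, S s by have [t [Tt Bt]] := hcov e he; exists t.
have Fcl : forall s, S s -> rel_closed G T B C (F s) /\ exists x, F s x.
  move=> s [Ts Bse]; split.
    split; first by move=> x [].
    move=> x Cx nF.
    have [t' [Tt [Bt Hg]]] : exists t', T t' /\ B t' x /\
        ~ exists g, B t' g /\ (C g /\ exists x, B s x /\ ~ U (mul (mul (inv g) x) g)).
      apply: NNPP => H; apply: nF; split => // t' Tt Bt.
      apply: NNPP => H'; apply: H; by exists t'.
    exists (B t'); split; first exact: Bopen.
    split => // y By Cy [_ Hy]; apply: Hg; exact: Hy.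
  have [x [Bx nW]] : exists x, B s x /\ ~ (G x /\ forall h, C h ->
      exists u, U u /\ x = mul (mul h u) (inv h)).
    apply: NNPP => H; apply: NV; exists s; split => //; split => // y By.
    apply: NNPP => H'; apply: H; by exists y.
  have Gx : G x by exact: (hBG _ Ts).
  have [h [Ch nu]] : exists h, C h /\ ~ exists u, U u /\ x = mul (mul h u) (inv h).
    apply: NNPP => H; apply: nW; split => // h Ch.
    apply: NNPP => H'; apply: H; by exists h.
  have Gh := hCG _ Ch.
  exists h; split => // t' Tt Bt; exists h; split => //; split => //.
  exists x; split => // Uc; apply: nu; eexists; split; first exact: Uc.
  have Gih := hinvG _ Gh.
  rewrite (hassoc _ _ _ Gh (hmulG _ _ Gih Gx) Gh).
  rewrite (hassoc _ _ _ Gh Gih Gx) (proj2 (hinv _ Gh)) (proj1 (hid _ Gx)).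
  rewrite -(hassoc _ _ _ Gx Gh Gih) (proj2 (hinv _ Gh)) (proj2 (hid _ Gx)).
  by [].
have Ffilt : forall s1 s2, S s1 -> S s2 -> exists s3, S s3 /\
    rsubset (F s3) (fun x => F s1 x /\ F s2 x).
  move=> s1 s2 [T1 B1] [T2 B2].
  have [s3 [T3 [B3 sub]]] := hint s1 s2 e T1 T2 B1 B2.
  exists s3; split => // h [Ch H]; split; split => // t' Tt Bt;
    have [g [Bg [Cg [x [Bx nU]]]]] := H t' Tt Bt; exists g; split => //;
    split => //; exists x; split => //; by have [] := sub x Bx.
have [h0 [Ch0 Fh0]] := hCc k S F S0def Famdef Sne Fcl Ffilt.
have Gh0 := hCG _ Ch0.
have Gih0 := hinvG _ Gh0.
case: hU => [UG [U0 [oU0 [U0e U0U]]]].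
have U0c : U0 (mul (mul (inv h0) e) h0).
  by rewrite (proj2 (hid _ Gih0)) (proj1 (hinv _ Gh0)).
have [V1 [V2 [o1 [o2 [v1 [v2 H12]]]]]] :=
  hcm _ _ (hmulG _ _ Gih0 he) Gh0 U0 oU0 U0c.
have [V3 [V4 [o3 [o4 [v3 [v4 H34]]]]]] := hcm _ _ Gih0 he V1 o1 v1.
have [V5 [o5 [v5 H5]]] := hci _ Gh0 V3 o3 v3.
have [t [Tt [Bte subt]]] := (proj2 o4) e v4.
have [_ Ht] := Fh0 t (conj Tt Bte).
have [t' [Tt' [Bt' sub']]] := (proj2 (Iopen _ _ o2 o5)) h0 (conj v2 v5).
have [g [Bg [Cg [x [Bx nU]]]]] := Ht t' Tt' Bt'.
apply: nU; apply: U0U; have [g2 g5] := sub' g Bg.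
apply: H12 => //; apply: H34; [exact: H5 | exact: subt].
Qed.
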